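(* For every positive integer $k$, $R_{3,\dots,3}(W_3^{\otimes k})\leq(2+k)2^{k-1}$, where $W_3^{\otimes k}$ is viewed in $S^3\mathbb{C}^2\otimes\cdots\otimes S^3\mathbb{C}^2$ ($k$ factors).
   Context: Identify $S^3\mathbb{C}^2$ with binary cubic forms in a basis $\{x,y\}$; $W_3=x^2y$ (equivalently $y\otimes x\otimes x+x\otimes y\otimes x+x\otimes x\otimes y$). The partially symmetric rank $R_{d_1,\dots,d_k}(T)$ is the minimal $r$ such that $T=\sum_{i=1}^r v_{i,1}^{\otimes d_1}\otimes\cdots\otimes v_{i,k}^{\otimes d_k}$ with $v_{i,j}\in\mathbb{C}^2$. *)

(* Defs.v *)
(* C is modelled as R[i] = complex R for an arbitrary
   R : realType (for R the real numbers this is exactly the field C). *)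
From HB Require Import structures.
From mathcomp Require Import all_boot all_order all_algebra.
From mathcomp Require Import complex.
From mathcomp Require Import reals.
Set Implicit Arguments. Unset Strict Implicit. Unset Printing Implicit Defensive.
Import Order.TTheory GRing.Theory Num.Theory.
Local Open Scope ring_scope.

(* Index set of a tensor in (C^2)^{(x)d_1} (x) ... (x) (C^2)^{(x)d_k}:
   for each factor j < k and each position l < d_j, a basis index in {0,1}
   (0 <-> x, 1 <-> y). *)
Definition tindex (k : nat) (d : 'I_k -> nat) : Type :=
  forall j : 'I_k, 'I_(d j) -> 'I_2.

Definition tensor (F : Type) (k : nat) (d : 'I_k -> nat) : Type :=
  tindex d -> F.

Definition ps_decomposition (F : comNzRingType) (k : nat) (d : 'I_k -> nat)
    (T : tensor F d) (r : nat) (v : 'I_r -> 'I_k -> 'I_2 -> F) : Prop :=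
  forall idx : tindex d,
    T idx = \sum_(i < r) \prod_(j < k) \prod_(l < d j) v i j (idx j l).

Definition ps_decomposable (F : comNzRingType) (k : nat) (d : 'I_k -> nat)
    (T : tensor F d) (r : nat) : Prop :=
  exists v : 'I_r -> 'I_k -> 'I_2 -> F, ps_decomposition T v.

Definition ps_rank_le (F : comNzRingType) (k : nat) (d : 'I_k -> nat)
    (T : tensor F d) (n : nat) : Prop :=
  exists2 r : nat, (r <= n)%N & ps_decomposable T r.

(* W_3 = x^2 y = y(x)x(x)x + x(x)y(x)x + x(x)x(x)y in S^3 C^2 inside (C^2)^{(x)3}:
   coordinate 1 exactly when exactly one index equals y (= 1). *)
Definition W3 (F : comNzRingType) (idx : 'I_3 -> 'I_2) : F :=
  if #|[pred l : 'I_3 | val (idx l) == 1%N]| == 1%N then 1 else 0.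

Definition W3_pow (F : comNzRingType) (k : nat) : tensor F (fun _ : 'I_k => 3%N) :=
  fun idx => \prod_(j < k) W3 F (idx j).
Arguments W3_pow F k idx : clear implicits.

(* Main.v *)
Require Import Defs.
From HB Require Import structures.
From mathcomp Require Import all_boot all_order all_algebra.
From mathcomp Require Import complex.
From mathcomp Require Import reals.
From mathcomp Require Import ring.
Import Order.TTheory GRing.Theory Num.Theory.
Set Implicit Arguments. Unset Strict Implicit.
Local Open Scope ring_scope.

Definition vec2 (F : Type) (p q : F) : 'I_2 -> F := fun b => if val b == 0%N then p else q.
Definition cube (F : comNzRingType) (v : 'I_2 -> F) (a : 'I_3 -> 'I_2) : F := \prod_(l < 3) v (a l).

Lemma W3E (F : comNzRingType) (a : 'I_3 -> 'I_2) :
  W3 F a = let s := (val (a ord0) + val (a (lift ord0 ord0)) + val (a ord_max))%N in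
     if s == 1%N then 1 else 0.
Proof.
rewrite /W3 -sum1_card big_mkcond /= !big_ord_recl big_ord0 /=.
rewrite !inE.
have e1 : (lift ord0 (lift ord0 ord0)) = ord_max :> 'I_3 by apply/val_inj.
rewrite e1.
by case: (a ord0) => [[|[|?]] ?] //; case: (a (lift ord0 ord0)) => [[|[|?]] ?] //;
  case: (a ord_max) => [[|[|?]] ?].
Qed.

Lemma local_id (F : comNzRingType) (mu nu : F) (a : 'I_3 -> 'I_2) :
  2 * mu ^+ 2 * nu = 1 ->
  cube (vec2 mu nu) a + cube (vec2 (- mu) nu) a = W3 F a + 2 * nu ^+ 3 * cube (vec2 0 1) a.
Proof.
move=> H.
rewrite W3E /cube /vec2 !big_ord_recl !big_ord0 /=.
have e1 : (lift ord0 (lift ord0 ord0)) = ord_max :> 'I_3 by apply/val_inj.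
rewrite e1.
case: (a ord0) => [[|[|?]] ?] //; case: (a (lift ord0 ord0)) => [[|[|?]] ?] //;
  case: (a ord_max) => [[|[|?]] ?] //=. all: apply/eqP; rewrite -subr_eq0; apply/eqP; first [ transitivity ((2 * mu ^+ 2 * nu - 1) * 1); [ring|by rewrite H subrr mul0r] | ring ].
Qed.

Section Lag.
Variable F : numFieldType.
Definition xx (n : nat) : F := n.+1%:R.
Definition ee (a : nat) (s : F) : F := xx a / (xx a - s).

Lemma xx_inj a b : (xx a == xx b) = (a == b).
Proof. by rewrite /xx eqr_nat eqSS. Qed.

Lemma key a b t : xx a != t -> xx b != t -> a != b ->
  ee a t * ee b t = ee a t * ee b (xx a) + ee b t * ee a (xx b).
Proof.
move=> ha hb hab.
have hab' : xx a != xx b by rewrite xx_inj.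
rewrite /ee; move: ha hb hab'; generalize (xx a) (xx b); move=> X Y ha hb hab'.
field.
by rewrite !subr_eq0 ha hb hab' eq_sym hab'.
Qed.

Variables w y : nat -> F.

Lemma pf k t : (forall i, (i < k)%N -> xx i != t) ->
  \prod_(0 <= i < k) (w i + y i * ee i t) =
  \prod_(0 <= i < k) w i + \sum_(0 <= j < k) y j * ee j t * \prod_(0 <= i < k | i != j) (w i + y i * ee i (xx j)).
Proof.
elim: k t => [|k IH] t ht.
  by rewrite !big_geq // addr0.
have ht' : forall i, (i < k)%N -> xx i != t by move=> i hi; apply: ht; apply: ltnW.
have hk : forall i, (i < k)%N -> xx i != xx k by move=> i hi; rewrite xx_inj ltn_eqF.
rewrite !big_nat_recr //= (IH t ht').
have -> : \prod_(0 <= i < k.+1 | i != k) (w i + y i * ee i (xx k)) = \prod_(0 <= i < k) (w i + y i * ee i (xx k)).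
  rewrite big_mkcond big_nat_recr //= eqxx mulr1.
  apply: eq_big_nat => i /andP[_ lt]; by rewrite (ltn_eqF lt).
rewrite (IH (xx k) hk).
have -> : \sum_(0 <= j < k) y j * ee j t * \prod_(0 <= i < k.+1 | i != j) (w i + y i * ee i (xx j))
  = \sum_(0 <= j < k) (y j * ee j t * \prod_(0 <= i < k | i != j) (w i + y i * ee i (xx j))) * (w k + y k * ee k (xx j)).
  apply: eq_big_nat => j /andP[_ lt].
  by rewrite big_mkcond big_nat_recr //= -big_mkcond /= (gtn_eqF lt) mulrA.
set P := \prod_(0 <= i < k) w i.
rewrite mulrDl !mulr_suml [in RHS]mulrDr mulr_sumr.
have -> : \sum_(0 <= i < k) y i * ee i t * \prod_(0 <= i0 < k | i0 != i) (w i0 + y i0 * ee i0 (xx i)) * (w k + y k * ee k t)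
  = \sum_(0 <= i < k) ((y i * ee i t * \prod_(0 <= i0 < k | i0 != i) (w i0 + y i0 * ee i0 (xx i))) * (w k + y k * ee k (xx i))
      + y k * ee k t * (y i * ee i (xx k) * \prod_(0 <= i0 < k | i0 != i) (w i0 + y i0 * ee i0 (xx i)))).
  apply: eq_big_nat => j /andP[_ lt].
  have := key (ht' j lt) (ht k (ltnSn k)) (negbT (ltn_eqF lt)).
  set Q := \prod_(0 <= i0 < k | i0 != j) _ => hkey.
  transitivity (y j * Q * (ee j t * w k) + y j * y k * Q * (ee j t * ee k t)); first by ring.
  rewrite hkey; ring.
rewrite big_split /=.
ring.
Qed.

Lemma ee0 i : ee i 0 = 1.
Proof. by rewrite /ee subr0 divff // /xx pnatr_eq0. Qed.

End Lag.
Lemma lagr (F : numFieldType) K (W Y : 'I_K.+1 -> F) :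
  \prod_i W i = \prod_i (W i + Y i) -
     \sum_j Y j * \prod_(i | i != j) (W i + Y i * ee i (xx F j)).
Proof.
have h0 : forall i, (i < K.+1)%N -> xx F i != 0 by move=> i _; rewrite /xx pnatr_eq0.
move: (@pf F (fun n => W (inord n)) (fun n => Y (inord n)) K.+1 0 h0).
rewrite !big_mkord => H.
have e1 : \prod_(i < K.+1) (W (inord i) + Y (inord i) * ee (F:=F) i 0) = \prod_i (W i + Y i).
  by apply: eq_bigr => i _; rewrite ee0 mulr1 inord_val.
have e2 : \prod_(i < K.+1) W (inord i) = \prod_i W i.
  by apply: eq_bigr => i _; rewrite inord_val.
rewrite e1 e2 in H; rewrite H; apply/esym/eqP; rewrite subr_eq; apply/eqP; congr (_ + _).
apply: eq_bigr => j _; rewrite ee0 mulr1 inord_val; congr (_ * _).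
rewrite big_mkord; apply: eq_big => // i _; by rewrite inord_val.
Qed.


Section Main.
Variable R : realType.
Local Notation F := (R[i] : numClosedFieldType).

Definition nu (c : F) : F := 3.-root (c / 2).
Definition mu (c : F) : F := 2.-root (1 / (2 * nu c)).

Lemma vecs (c : F) : c != 0 -> 2 * mu c ^+ 2 * nu c = 1 /\ 2 * nu c ^+ 3 = c.
Proof.
move=> hc.
have h3 : nu c ^+ 3 = c / 2 by rewrite /nu rootCK.
have hnu : nu c != 0.
  apply/negP => /eqP h0; move: h3; rewrite h0 expr0n /= => /esym/eqP.
  by rewrite mulf_eq0 invr_eq0 pnatr_eq0 orbF (negbTE hc).
split; last by rewrite h3 mulrC -mulrA mulVf ?mulr1 // pnatr_eq0.
rewrite /mu rootCK // mul1r.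
move: hnu; generalize (nu c) => z hz; field.
by [].
Qed.

Definition At (c : F) (b : bool) : 'I_2 -> F := vec2 (if b then mu c else - mu c) (nu c).

Lemma At_sum (c : F) a : c != 0 ->
  \sum_(b : bool) cube (At c b) a = W3 F a + c * cube (vec2 (0 : F) 1) a.
Proof.
move=> hc; have [h1 h2] := vecs hc.
by rewrite big_bool /= /At local_id // h2.
Qed.

Lemma prod_neq (n : nat) (j : 'I_n.+1) (G : 'I_n.+1 -> F) :
  \prod_(i | i != j) G i = \prod_(i < n) G (lift j i).
Proof.
rewrite big_mkcond (bigD1_ord j) //= eqxx mul1r.
by apply: eq_bigr => i _; rewrite eq_sym neq_lift.
Qed.

End Main.

Lemma cubeN (F : comNzRingType) a : cube (vec2 (0 : F) (-1)) a = - cube (vec2 (0 : F) 1) a.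
Proof.
have h : forall b : 'I_2, vec2 (0 : F) (-1) b = - vec2 (0 : F) 1 b.
  by move=> b; rewrite /vec2; case: (val b == 0%N); rewrite ?oppr0.
rewrite /cube; under eq_bigr do rewrite h.
rewrite !big_ord_recl !big_ord0; ring.
Qed.

Lemma ee_neq0 (F : numFieldType) (i j : nat) : i != j -> ee i (xx F j) != 0.
Proof.
move=> hij; rewrite /ee mulf_neq0 //.
  by rewrite /xx pnatr_eq0.
by rewrite invr_eq0 subr_eq0 xx_inj.
Qed.

Theorem theorem3p3 (R : realType) (k : nat) (hk : (0 < k)%N) :
  ps_rank_le (W3_pow R[i] k) ((2 + k) * 2 ^ k.-1)%N.
Proof.
case: k hk => [//|k] _.
pose I := ({ffun 'I_k.+1 -> bool} + ('I_k.+1 * {ffun 'I_k -> bool}))%type.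
pose V (p : I) (i : 'I_k.+1) : 'I_2 -> R[i] := match p with
  | inl f => At (1 : R[i]) (f i)
  | inr p => match unlift p.1 i with
             | Some i' => At (ee i (xx R[i] p.1)) (p.2 i')
             | None => vec2 0 (-1) end end.
exists #|{: I}|.
  rewrite card_sum card_prod !card_ffun !card_bool !card_ord /= expnS.
  by rewrite mulnDl.
exists (fun n => V (enum_val n)) => idx.
transitivity (\sum_(p : I) \prod_(j < k.+1) \prod_(l < 3) V p j (idx j l)); last first.
  rewrite (reindex (fun n : 'I_#|{: I}| => enum_val n)) //; exact: onW_bij (enum_val_bij _).
rewrite big_sumType /=.
pose Wv := fun j : 'I_k.+1 => W3 R[i] (idx j).
pose Yv := fun j : 'I_k.+1 => cube (vec2 (0 : R[i]) 1) (idx j).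
have e1 : \sum_(f : {ffun 'I_k.+1 -> bool}) \prod_(j < k.+1) \prod_(l < 3) At (1 : R[i]) (f j) (idx j l)
    = \prod_j (Wv j + Yv j).
  rewrite -(bigA_distr_bigA (fun (j : 'I_k.+1) (b : bool) => \prod_(l < 3) At (1 : R[i]) b (idx j l))) /=; apply: eq_bigr => j _.
  by have := At_sum (idx j) (oner_neq0 R[i]); rewrite mul1r.
have e2 : \sum_(p : 'I_k.+1 * {ffun 'I_k -> bool}) \prod_(j < k.+1) \prod_(l < 3)
           match unlift p.1 j with
           | Some i' => At (ee j (xx R[i] p.1)) (p.2 i')
           | None => vec2 0 (-1)
           end (idx j l)
    = \sum_j (- Yv j) * \prod_(i | i != j) (Wv i + Yv i * ee i (xx R[i] j)).
  rewrite -(pair_bigA _ (fun (j : 'I_k.+1) (g : {ffun 'I_k -> bool}) => \prod_(j0 < k.+1) \prod_(l < 3)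
           match unlift j j0 with
           | Some i' => At (ee j0 (xx R[i] j)) (g i')
           | None => vec2 0 (-1)
           end (idx j0 l))) /=; apply: eq_bigr => j _.
  transitivity (\sum_(g : {ffun 'I_k -> bool}) (cube (vec2 0 (-1)) (idx j) *
      \prod_(i < k) cube (At (ee (lift j i) (xx R[i] j)) (g i)) (idx (lift j i)))).
    apply: eq_bigr => g _; rewrite (bigD1_ord j) //= unlift_none; congr (_ * _).
    by apply: eq_bigr => i _; rewrite liftK.
  rewrite -mulr_sumr -(bigA_distr_bigA (fun (i : 'I_k) (b : bool) => cube (At (ee (lift j i) (xx R[i] j)) b) (idx (lift j i)))) cubeN prod_neq; congr (_ * _).
  apply: eq_bigr => i _; rewrite At_sum ?[_ * Yv _]mulrC //.
  apply: ee_neq0; rewrite eq_sym; exact: neq_lift.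
rewrite e1 e2 /W3_pow (lagr Wv Yv) -sumrN; congr (_ + _).
by apply: eq_bigr => j _; rewrite mulNr.
Qed.
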